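(* For any $k$-atomic probability distributions $\Gamma,\Gamma'$ on $\mathbb R^d$, $$\sup_{\theta\in S^{d-1}}W_1(\Gamma_\theta,\Gamma'_\theta)\le W_1(\Gamma,\Gamma')\le k^2\sqrt d\,\sup_{\theta\in S^{d-1}}W_1(\Gamma_\theta,\Gamma'_\theta).$$
   Context: A $k$-atomic distribution is a probability distribution supported on at most $k$ points. For $\theta\in\mathbb R^d$, $\Gamma_\theta$ denotes the law of $\theta^\top U$ with $U\sim\Gamma$ (pushforward by $u\mapsto\theta^\top u$). $W_1(\Gamma,\Gamma')=\inf\mathbb E\|U-U'\|_2$ over couplings of $U\sim\Gamma$, $U'\sim\Gamma'$ (on $\mathbb R$ the norm is absolute value). $S^{d-1}$ is the unit sphere of $\mathbb R^d$. *)

(* Defs.v *)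
From Stdlib Require Import Reals Lra ClassicalEpsilon.
Open Scope R_scope.

Fixpoint sumR (n : nat) (f : nat -> R) : R :=
  match n with O => 0 | S m => sumR m f + f m end.

Definition Rsup (E : R -> Prop) : R :=
  epsilon (inhabits 0) (fun m => is_lub E m).
Definition Rinf (E : R -> Prop) : R := - Rsup (fun x => E (- x)).

(* Vectors of R^d are represented by u : nat -> R, only coordinates i < d matter. *)
Definition dot (d : nat) (u v : nat -> R) : R := sumR d (fun i => u i * v i).
Definition eucl_dist (d : nat) (u v : nat -> R) : R :=
  sqrt (sumR d (fun i => (u i - v i) ^ 2)).
Definition on_sphere (d : nat) (th : nat -> R) : Prop := dot d th th = 1.

(* A k-atomic probability distribution on T: sum_{i<k} w i * delta_{x i},
   with w i >= 0 and sum_{i<k} w i = 1. *)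
Definition is_prob (k : nat) (w : nat -> R) : Prop :=
  (forall i, (i < k)%nat -> 0 <= w i) /\ sumR k w = 1.

Definition is_coupling (k : nat) (w w' : nat -> R) (pi : nat -> nat -> R) : Prop :=
  (forall i j, (i < k)%nat -> (j < k)%nat -> 0 <= pi i j) /\
  (forall i, (i < k)%nat -> sumR k (fun j => pi i j) = w i) /\
  (forall j, (j < k)%nat -> sumR k (fun i => pi i j) = w' j).

Definition W1 {T : Type} (dist : T -> T -> R) (k : nat)
    (w : nat -> R) (x : nat -> T) (w' : nat -> R) (y : nat -> T) : R :=
  Rinf (fun c => exists pi, is_coupling k w w' pi /\
          c = sumR k (fun i => sumR k (fun j => pi i j * dist (x i) (y j)))).

(* Atoms of the pushforward Gamma_theta: theta^T x_i (same weights). *)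
Definition proj (d : nat) (th : nat -> R) (x : nat -> nat -> R) : nat -> R :=
  fun i => dot d th (x i).

Definition abs_dist (a b : R) : R := Rabs (a - b).

Definition sliced_sup (d k : nat) (w : nat -> R) (x : nat -> nat -> R)
    (w' : nat -> R) (y : nat -> nat -> R) : R :=
  Rsup (fun s => exists th, on_sphere d th /\
          s = W1 abs_dist k w (proj d th x) w' (proj d th y)).

(* Main.v *)
Require Import Defs.
From Stdlib Require Import Reals Lra Lia Psatz ClassicalEpsilon FunctionalExtensionality.
Open Scope R_scope.

Lemma sumR_S n f : sumR (S n) f = sumR n f + f n.
Proof. reflexivity. Qed.

Lemma sumR_ext n f g : (forall i, (i < n)%nat -> f i = g i) -> sumR n f = sumR n g.
Proof. induction n; intros H; simpl; auto. rewrite IHn by (intros; apply H; lia). rewrite H by lia. reflexivity. Qed.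

Lemma sumR_le n f g : (forall i, (i < n)%nat -> f i <= g i) -> sumR n f <= sumR n g.
Proof. induction n; intros H; simpl. lra. assert (H1 := H n ltac:(lia)).
 assert (sumR n f <= sumR n g) by (apply IHn; intros; apply H; lia). lra. Qed.

Lemma sumR_nonneg n f : (forall i, (i < n)%nat -> 0 <= f i) -> 0 <= sumR n f.
Proof. induction n; intros H; simpl. lra. assert (0 <= f n) by (apply H; lia).
 assert (0 <= sumR n f) by (apply IHn; intros; apply H; lia). lra. Qed.

Lemma sumR_scal n a f : sumR n (fun i => a * f i) = a * sumR n f.
Proof. induction n; [simpl; ring| rewrite !sumR_S, IHn; ring]. Qed.

Lemma sumR_const n a : sumR n (fun _ => a) = INR n * a.
Proof. induction n; [simpl; ring|]. rewrite sumR_S, IHn, S_INR; ring. Qed.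

Lemma sumR_abs n f : Rabs (sumR n f) <= sumR n (fun i => Rabs (f i)).
Proof. induction n; simpl. rewrite Rabs_R0; lra. eapply Rle_trans; [apply Rabs_triang|]. lra. Qed.

Lemma sumR_term n f l : (forall i, (i < n)%nat -> 0 <= f i) -> (l < n)%nat -> f l <= sumR n f.
Proof. induction n; intros H Hl; [lia|]. simpl. destruct (Nat.eq_dec l n).
 - subst. assert (0 <= sumR n f) by (apply sumR_nonneg; intros; apply H; lia). lra.
 - assert (f l <= sumR n f) by (apply IHn; [intros; apply H; lia | lia]).
   assert (0 <= f n) by (apply H; lia). lra. Qed.

Lemma quad n a b t : sumR n (fun l => (t * a l - b l)^2) =
  t^2 * sumR n (fun i => a i * a i) - 2*t*sumR n (fun i => a i * b i) + sumR n (fun l => b l ^ 2).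
Proof. induction n; [simpl; ring| rewrite !sumR_S, IHn; ring]. Qed.

Lemma quad2 n a b t : sumR n (fun l => (a l - t * b l)^2) = sumR n (fun l => a l ^ 2)
  - 2 * t * sumR n (fun l => a l * b l) + t^2 * sumR n (fun l => b l ^ 2).
Proof. induction n; [simpl; ring| rewrite !sumR_S, IHn; ring]. Qed.

Lemma dot_sub d th a b : dot d th (fun l => a l - b l) = dot d th a - dot d th b.
Proof. unfold dot. induction d; [simpl; ring| rewrite !sumR_S, IHd; ring]. Qed.

Lemma Rsup_spec E : bound E -> (exists x, E x) -> is_lub E (Rsup E).
Proof. intros Hb He. unfold Rsup. apply epsilon_spec.
 destruct (completeness E Hb He) as [m' Hm']. exists m'; exact Hm'. Qed.

Lemma Rinf_aux E : (exists x, E x) -> (forall c, E c -> 0 <= c) ->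
  is_lub (fun x => E (-x)) (Rsup (fun x => E (-x))).
Proof. intros He Hp. apply Rsup_spec.
 - exists 0. intros z Hz. apply Hp in Hz. lra.
 - destruct He as [x Hx]. exists (-x). rewrite Ropp_involutive. exact Hx. Qed.

Lemma Rinf_lb E : (exists x, E x) -> (forall c, E c -> 0 <= c) -> forall c, E c -> Rinf E <= c.
Proof. intros He Hp c Hc. destruct (Rinf_aux E He Hp) as [Hub _]. unfold Rinf.
 assert (H: (fun x => E (-x)) (-c)) by (simpl; rewrite Ropp_involutive; exact Hc).
 apply Hub in H. lra. Qed.

Lemma Rinf_glb E : (exists x, E x) -> (forall c, E c -> 0 <= c) ->
  forall b, (forall c, E c -> b <= c) -> b <= Rinf E.
Proof. intros He Hp b Hb. destruct (Rinf_aux E He Hp) as [_ Hlub]. unfold Rinf.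
 assert (Rsup (fun x => E (-x)) <= -b). { apply Hlub. intros z Hz. apply Hb in Hz. lra. }
 lra. Qed.

Lemma coupling_exists k w w' : is_prob k w -> is_prob k w' -> exists pi, is_coupling k w w' pi.
Proof. intros [Hw1 Hw2] [Hw1' Hw2']. exists (fun i j => w i * w' j). split; [|split].
 - intros i j Hi Hj. apply Rmult_le_pos; auto.
 - intros i Hi. rewrite sumR_scal, Hw2'. ring.
 - intros j Hj. rewrite (sumR_ext k _ (fun i => w' j * w i)) by (intros; ring).
   rewrite sumR_scal, Hw2. ring. Qed.

Lemma W1_compare {T1 T2 : Type} (d1 : T1 -> T1 -> R) (d2 : T2 -> T2 -> R) k w w'
  x1 y1 x2 y2 c :
  is_prob k w -> is_prob k w' -> 0 < c -> (forall a b, 0 <= d1 a b) -> (forall a b, 0 <= d2 a b) ->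
  (forall i j, (i < k)%nat -> (j < k)%nat -> d1 (x1 i) (y1 j) <= c * d2 (x2 i) (y2 j)) ->
  W1 d1 k w x1 w' y1 <= c * W1 d2 k w x2 w' y2.
Proof.
  intros Hw Hw' Hc Hd1 Hd2 Hle.
  destruct (coupling_exists k w w' Hw Hw') as [pi0 Hpi0].
  assert (Hnn : forall (T : Type) (dd : T -> T -> R) xx yy pi, (forall a b, 0 <= dd a b) ->
     is_coupling k w w' pi -> 0 <= sumR k (fun i => sumR k (fun j => pi i j * dd (xx i) (yy j)))).
  { intros T dd xx yy pi Hdd [Hp _]. apply sumR_nonneg; intros i Hi. apply sumR_nonneg; intros j Hj.
    apply Rmult_le_pos; auto. }
  assert (H: W1 d1 k w x1 w' y1 / c <= W1 d2 k w x2 w' y2).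
  { unfold W1 at 2. apply Rinf_glb.
    - eexists; exists pi0; split; [exact Hpi0 | reflexivity].
    - intros z [pi [Hpi ->]]. apply Hnn; auto.
    - intros z [pi [Hpi ->]].
      assert (H1: W1 d1 k w x1 w' y1 <= sumR k (fun i => sumR k (fun j => pi i j * d1 (x1 i) (y1 j)))).
      { unfold W1. apply Rinf_lb.
        + eexists; exists pi0; split; [exact Hpi0 | reflexivity].
        + intros z [pi' [Hpi' ->]]. apply Hnn; auto.
        + exists pi; split; auto. }
      assert (H2: sumR k (fun i => sumR k (fun j => pi i j * d1 (x1 i) (y1 j))) <=
                  c * sumR k (fun i => sumR k (fun j => pi i j * d2 (x2 i) (y2 j)))).
      { rewrite <- sumR_scal. apply sumR_le; intros i Hi. rewrite <- sumR_scal.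
        apply sumR_le; intros j Hj. destruct Hpi as [Hp _].
        assert (0 <= pi i j) by auto.
        assert (pi i j * d1 (x1 i) (y1 j) <= pi i j * (c * d2 (x2 i) (y2 j))) by
          (apply Rmult_le_compat_l; auto).
        lra. }
      apply (Rmult_le_reg_l c); auto.
      replace (c * (W1 d1 k w x1 w' y1 / c)) with (W1 d1 k w x1 w' y1) by (field; lra).
      lra. }
  replace (W1 d1 k w x1 w' y1) with (c * (W1 d1 k w x1 w' y1 / c)) by (field; lra).
  apply Rmult_le_compat_l; lra.
Qed.

Lemma CS d th v : on_sphere d th -> Rabs (dot d th v) <= sqrt (sumR d (fun l => v l ^ 2)).
Proof.
  intros Hs. unfold on_sphere, dot in *.
  assert (Hq: forall t, 0 <= t^2 - 2*t*sumR d (fun i => th i * v i) + sumR d (fun l => v l ^ 2)).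
  { intros t. pose proof (quad d th v t) as E. rewrite Hs in E.
    assert (0 <= sumR d (fun l => (t * th l - v l)^2)) by (apply sumR_nonneg; intros; apply pow2_ge_0).
    lra. }
  assert (HS: 0 <= sumR d (fun l => v l ^ 2)) by (apply sumR_nonneg; intros; apply pow2_ge_0).
  remember (sumR d (fun l => v l ^ 2)) as S. remember (sumR d (fun i => th i * v i)) as P.
  destruct (Req_dec S 0) as [H0|H0].
  - assert (P = 0). { specialize (Hq P). rewrite H0 in Hq. nra. }
    rewrite H, Rabs_R0. apply sqrt_pos.
  - assert (Hr: sqrt S * sqrt S = S) by (apply sqrt_sqrt; auto).
    assert (Hrp: 0 < sqrt S) by (apply sqrt_lt_R0; lra).
    pose proof (Hq (sqrt S)). pose proof (Hq (- sqrt S)).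
    apply Rabs_le; split; nra.
Qed.

Lemma proj_le d th x y i j : on_sphere d th ->
  abs_dist (proj d th x i) (proj d th y j) <= eucl_dist d (x i) (y j).
Proof. intros H. unfold abs_dist, proj, eucl_dist. rewrite <- dot_sub.
  exact (CS d th (fun l => x i l - y j l) H). Qed.

Definition Sgn n (e : nat -> R) := forall i, ((i < n)%nat -> e i = 1 \/ e i = -1) /\ ((n <= i)%nat -> e i = 1).
Definition upd (e : nat -> R) (n : nat) (s : R) := fun i => if Nat.eqb i n then s else e i.

Lemma sgn_max n : forall F : (nat -> R) -> R, exists e, Sgn n e /\ forall e', Sgn n e' -> F e' <= F e.
Proof.
  induction n; intros F.
  - exists (fun _ => 1). split. intros i; split; intros; [lia|reflexivity].
    intros e' He'. assert (e' = fun _ => 1).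
    { apply functional_extensionality; intros i; apply (He' i); lia. }
    subst; lra.
  - destruct (IHn (fun e => F (upd e n 1))) as [e1 [H1 M1]].
    destruct (IHn (fun e => F (upd e n (-1)))) as [e2 [H2 M2]].
    assert (Hup : forall e s, Sgn n e -> (s = 1 \/ s = -1) -> Sgn (S n) (upd e n s)).
    { intros e s He Hs i. unfold upd. destruct (Nat.eqb_spec i n).
      - subst; split; intros; [auto|lia].
      - split; intros; apply (He i); lia. }
    assert (Hdec : forall e', Sgn (S n) e' -> Sgn n (upd e' n 1) /\ e' = upd (upd e' n 1) n (e' n)).
    { intros e' He'. split.
      - intros i; unfold upd; destruct (Nat.eqb_spec i n).
        + split; intros; [lia|reflexivity].
        + split; intros; apply (He' i); lia.
      - apply functional_extensionality; intros i. unfold upd.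
        destruct (Nat.eqb_spec i n); subst; reflexivity. }
    assert (Hcmp: forall e', Sgn (S n) e' -> F e' <= F (upd e1 n 1) \/ F e' <= F (upd e2 n (-1))).
    { intros e' He'. destruct (Hdec e' He') as [Hs Heq].
      destruct (proj1 (He' n) (Nat.lt_succ_diag_r n)) as [Hn|Hn]; rewrite Hn in Heq;
        pose proof (f_equal F Heq) as HF; rewrite HF.
      - left. exact (M1 _ Hs).
      - right. exact (M2 _ Hs). }
    destruct (Rle_dec (F (upd e1 n 1)) (F (upd e2 n (-1)))).
    + exists (upd e2 n (-1)). split. apply Hup; auto.
      intros e' He'. destruct (Hcmp e' He'); lra.
    + exists (upd e1 n 1). split. apply Hup; auto.
      intros e' He'. destruct (Hcmp e' He'); lra.
Qed.

Definition flip (e : nat -> R) k := fun i => if Nat.eqb i k then - e i else e i.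

Lemma flip_sum n k e (g : nat -> R) : (k < n)%nat ->
  sumR n (fun i => flip e k i * g i) = sumR n (fun i => e i * g i) - 2 * e k * g k.
Proof.
  induction n; intros Hk; [lia|]. rewrite !sumR_S. unfold flip at 2.
  destruct (Nat.eqb_spec n k).
  - subst. rewrite (sumR_ext k _ (fun i => e i * g i)). ring.
    intros i Hi. unfold flip. destruct (Nat.eqb_spec i k); [lia|reflexivity].
  - rewrite IHn by lia. ring.
Qed.

Lemma flip_sgn N e k : Sgn N e -> (k < N)%nat -> Sgn N (flip e k).
Proof. intros He Hk i. unfold flip. destruct (Nat.eqb_spec i k).
 - subst. split; intros; [|lia]. destruct (proj1 (He k) Hk) as [-> | ->]; [right|left]; ring.
 - exact (He i). Qed.

Definition cvec d (u : nat -> nat -> R) m l := u m l * / sqrt (sumR d (fun l => u m l ^ 2)).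
Definition Xv N (c : nat -> nat -> R) (e : nat -> R) l := sumR N (fun m => e m * c m l).
Definition Fv d N c e := sumR d (fun l => Xv N c e l ^ 2).

Lemma cvec_sq d u m : sumR d (fun l => cvec d u m l ^ 2) <= 1 /\
  (sqrt (sumR d (fun l => u m l ^ 2)) <> 0 -> sumR d (fun l => cvec d u m l ^ 2) = 1).
Proof.
  assert (HS: 0 <= sumR d (fun l => u m l ^ 2)) by (apply sumR_nonneg; intros; apply pow2_ge_0).
  assert (E: sumR d (fun l => cvec d u m l ^ 2) =
     (/ sqrt (sumR d (fun l => u m l ^ 2)))^2 * sumR d (fun l => u m l ^ 2)).
  { rewrite <- sumR_scal. apply sumR_ext. intros; unfold cvec; ring. }
  rewrite E. remember (sumR d (fun l => u m l ^ 2)) as S.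
  destruct (Req_dec (sqrt S) 0) as [H0|H0].
  - apply sqrt_eq_0 in H0; auto. rewrite H0. split.
    + rewrite Rmult_0_r; lra.
    + intros Hn; rewrite sqrt_0 in Hn; congruence.
  - assert (Hr: sqrt S * sqrt S = S) by (apply sqrt_sqrt; auto).
    assert (Hq: (/ sqrt S)^2 * (sqrt S * sqrt S) = 1) by (field; auto). rewrite Hr in Hq.
    split; [lra | auto].
Qed.

Lemma cvec_abs d u m l : (l < d)%nat -> Rabs (cvec d u m l) <= 1.
Proof. intros Hl.
  assert (cvec d u m l ^ 2 <= 1).
  { eapply Rle_trans; [| apply (proj1 (cvec_sq d u m))].
    apply (sumR_term d (fun l => cvec d u m l ^ 2)); auto. intros; apply pow2_ge_0. }
  apply Rabs_le; split; nra. Qed.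

Lemma cvec_dot d u m (X : nat -> R) : sqrt (sumR d (fun l => u m l ^ 2)) <> 0 ->
  sumR d (fun l => X l * u m l) = sqrt (sumR d (fun l => u m l ^ 2)) * sumR d (fun l => X l * cvec d u m l).
Proof. intros H. rewrite <- sumR_scal. apply sumR_ext; intros; unfold cvec. field. auto. Qed.

Lemma Xv_abs d N u e l : Sgn N e -> (l < d)%nat -> Rabs (Xv N (cvec d u) e l) <= INR N.
Proof. intros He Hl. unfold Xv. eapply Rle_trans. apply sumR_abs.
  rewrite <- (Rmult_1_r (INR N)), <- sumR_const. apply sumR_le. intros m Hm.
  rewrite Rabs_mult.
  assert (Rabs (e m) = 1) by (destruct (proj1 (He m) Hm) as [-> | ->];
     unfold Rabs; destruct Rcase_abs; lra).
  rewrite H, Rmult_1_l. apply cvec_abs; auto. Qed.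

Lemma Fv_bound d N u e : Sgn N e -> Fv d N (cvec d u) e <= INR d * INR N ^ 2.
Proof. intros He. unfold Fv. rewrite <- sumR_const. apply sumR_le. intros l Hl.
  pose proof (Xv_abs d N u e l He Hl). pose proof (pos_INR N).
  revert H. unfold Rabs. destruct Rcase_abs; intros; nra. Qed.

Lemma flip_ineq d N u e k : Sgn N e -> (k < N)%nat ->
  (forall e', Sgn N e' -> Fv d N (cvec d u) e' <= Fv d N (cvec d u) e) ->
  sumR d (fun l => cvec d u k l ^ 2) <= e k * sumR d (fun l => Xv N (cvec d u) e l * cvec d u k l).
Proof.
  intros He Hk Hmax. pose proof (Hmax _ (flip_sgn N e k He Hk)) as H.
  unfold Fv in H.
  rewrite (sumR_ext d (fun l => Xv N (cvec d u) (flip e k) l ^ 2)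
     (fun l => (Xv N (cvec d u) e l - (2 * e k) * cvec d u k l)^2)) in H.
  2:{ intros l Hl. unfold Xv. rewrite flip_sum by auto. ring. }
  rewrite quad2 in H.
  destruct (proj1 (He k) Hk) as [Hek|Hek]; rewrite Hek in H |- *; nra.
Qed.

Lemma e0_sphere d : (0 < d)%nat -> on_sphere d (fun i => if Nat.eqb i 0 then 1 else 0).
Proof. intros Hd. unfold on_sphere, dot. destruct d as [|d]; [lia|]. clear Hd.
  induction d as [|d IH]. simpl; ring. rewrite sumR_S, IH. simpl. ring. Qed.

Lemma plank d N (u : nat -> nat -> R) : (0 < d)%nat -> exists th, on_sphere d th /\
  forall m, (m < N)%nat -> sqrt (sumR d (fun l => u m l ^ 2)) <= INR N * sqrt (INR d) * Rabs (dot d th (u m)).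
Proof.
  intros Hd.
  destruct (sgn_max N (Fv d N (cvec d u))) as [e [He Hmax]].
  assert (HF0: 0 <= Fv d N (cvec d u) e) by (unfold Fv; apply sumR_nonneg; intros; apply pow2_ge_0).
  pose proof (Fv_bound d N u e He) as HFb.
  destruct (Req_dec (Fv d N (cvec d u) e) 0) as [HF|HF].
  - assert (HX: forall l, (l < d)%nat -> Xv N (cvec d u) e l = 0).
    { intros l Hl. assert (Xv N (cvec d u) e l ^ 2 <= Fv d N (cvec d u) e).
      { unfold Fv. apply (sumR_term d (fun l => Xv N (cvec d u) e l ^ 2)); auto.
        intros; apply pow2_ge_0. }
      nra. }
    exists (fun i => if Nat.eqb i 0 then 1 else 0). split. apply e0_sphere; auto.
    intros m Hm. destruct (Req_dec (sqrt (sumR d (fun l => u m l ^ 2))) 0) as [H0|H0].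
    + rewrite H0. apply Rmult_le_pos; [apply Rmult_le_pos; [apply pos_INR| apply sqrt_pos] | apply Rabs_pos].
    + exfalso. pose proof (flip_ineq d N u e m He Hm Hmax) as Hfi.
      rewrite (proj2 (cvec_sq d u m) H0) in Hfi.
      rewrite (sumR_ext d _ (fun _ => 0)) in Hfi.
      2:{ intros l Hl; rewrite HX; auto; ring. }
      rewrite sumR_const, !Rmult_0_r in Hfi. lra.
  - assert (HFp: 0 < Fv d N (cvec d u) e) by lra.
    assert (Hr: sqrt (Fv d N (cvec d u) e) * sqrt (Fv d N (cvec d u) e) = Fv d N (cvec d u) e)
      by (apply sqrt_sqrt; lra).
    assert (Hrp: 0 < sqrt (Fv d N (cvec d u) e)) by (apply sqrt_lt_R0; auto).
    assert (Hq: sqrt (Fv d N (cvec d u) e) <= INR N * sqrt (INR d)).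
    { apply Rle_trans with (sqrt (INR d * INR N ^ 2)). apply sqrt_le_1_alt; auto.
      rewrite sqrt_mult_alt by apply pos_INR. rewrite sqrt_pow2 by apply pos_INR. lra. }
    remember (sqrt (Fv d N (cvec d u) e)) as r.
    exists (fun l => Xv N (cvec d u) e l / r). split.
    + unfold on_sphere, dot.
      rewrite (sumR_ext d _ (fun l => (/ r)^2 * (Xv N (cvec d u) e l ^ 2))).
      2:{ intros; field; lra. }
      rewrite sumR_scal. change (sumR d (fun l => Xv N (cvec d u) e l ^ 2)) with (Fv d N (cvec d u) e).
      rewrite <- Hr. field; lra.
    + intros m Hm. destruct (Req_dec (sqrt (sumR d (fun l => u m l ^ 2))) 0) as [H0|H0].
      * rewrite H0. apply Rmult_le_pos; [apply Rmult_le_pos; [apply pos_INR| apply sqrt_pos] | apply Rabs_pos].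
      * pose proof (flip_ineq d N u e m He Hm Hmax) as Hfi.
        rewrite (proj2 (cvec_sq d u m) H0) in Hfi.
        assert (Hdot: dot d (fun l => Xv N (cvec d u) e l / r) (u m) =
           / r * (sqrt (sumR d (fun l => u m l ^ 2)) * sumR d (fun l => Xv N (cvec d u) e l * cvec d u m l))).
        { unfold dot. rewrite <- (cvec_dot d u m (Xv N (cvec d u) e) H0). rewrite <- sumR_scal.
          apply sumR_ext; intros; field; lra. }
        rewrite Hdot.
        remember (sumR d (fun l => Xv N (cvec d u) e l * cvec d u m l)) as D.
        remember (sqrt (sumR d (fun l => u m l ^ 2))) as n.
        assert (Hn: 0 <= n) by (subst n; apply sqrt_pos).
        assert (HD: 1 <= Rabs D).
        { destruct (proj1 (He m) Hm) as [Hem|Hem]; rewrite Hem in Hfi; unfold Rabs;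
          destruct (Rcase_abs D); lra. }
        rewrite !Rabs_mult, (Rabs_pos_eq (/ r)) by (left; apply Rinv_0_lt_compat; auto).
        rewrite (Rabs_pos_eq n) by auto.
        assert (Hir: r * / r = 1) by (field; lra).
        assert (Hirp: 0 < / r) by (apply Rinv_0_lt_compat; auto).
        assert (H1: INR N * sqrt (INR d) * / r >= 1) by nra.
        assert (H2: n * Rabs D >= n) by nra.
        assert (H3: 0 <= n * Rabs D) by nra.
        nra.
Qed.

Theorem mainTheorem3 (d k : nat) (Hd : (0 < d)%nat)
    (w w' : nat -> R) (x y : nat -> nat -> R)
    (Hw : is_prob k w) (Hw' : is_prob k w') :
  sliced_sup d k w x w' y <= W1 (eucl_dist d) k w x w' y /\
  W1 (eucl_dist d) k w x w' y <=
    INR k ^ 2 * sqrt (INR d) * sliced_sup d k w x w' y.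
Proof.
  assert (Hk: (0 < k)%nat).
  { destruct k. destruct Hw as [_ H]; simpl in H; lra. lia. }
  destruct (plank d (k*k) (fun m l => x (m / k)%nat l - y (m mod k)%nat l) Hd) as [th0 [Hth0 Hpl]].
  assert (Habs: forall a b, 0 <= abs_dist a b) by (intros; apply Rabs_pos).
  assert (Heu: forall a b, 0 <= eucl_dist d a b) by (intros; apply sqrt_pos).
  assert (Hfirst: forall th, on_sphere d th ->
     W1 abs_dist k w (proj d th x) w' (proj d th y) <= W1 (eucl_dist d) k w x w' y).
  { intros th Hth. rewrite <- (Rmult_1_l (W1 (eucl_dist d) k w x w' y)).
    apply W1_compare; auto; try lra. intros i j Hi Hj. rewrite Rmult_1_l. apply proj_le; auto. }
  set (S := fun s => exists th, on_sphere d th /\ s = W1 abs_dist k w (proj d th x) w' (proj d th y)).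
  assert (Hlub: is_lub S (Rsup S)).
  { apply Rsup_spec.
    - exists (W1 (eucl_dist d) k w x w' y). intros s [th [Hth ->]]. auto.
    - exists (W1 abs_dist k w (proj d th0 x) w' (proj d th0 y)). exists th0; auto. }
  change (sliced_sup d k w x w' y) with (Rsup S).
  split.
  - apply Hlub. intros s [th [Hth ->]]. auto.
  - assert (Hc: W1 (eucl_dist d) k w x w' y <=
       INR k ^ 2 * sqrt (INR d) * W1 abs_dist k w (proj d th0 x) w' (proj d th0 y)).
    { apply W1_compare; auto.
      - assert (0 < INR k) by (apply lt_0_INR; auto).
        assert (0 < sqrt (INR d)) by (apply sqrt_lt_R0; apply lt_0_INR; auto). apply Rmult_lt_0_compat; auto. apply pow_lt; auto.
      - intros i j Hi Hj. specialize (Hpl (i*k+j)%nat ltac:(nia)). cbv beta in Hpl.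
        assert (Hdv: ((i*k+j)/k = i)%nat) by (symmetry; apply Nat.div_unique with (r:=j); nia).
        assert (Hmd: ((i*k+j) mod k = j)%nat) by (symmetry; apply Nat.mod_unique with (q:=i); nia).
        rewrite Hdv, Hmd, mult_INR in Hpl.
        unfold eucl_dist, abs_dist, proj. rewrite <- dot_sub.
        replace (INR k ^ 2) with (INR k * INR k) by ring. exact Hpl. }
    assert (H1: W1 abs_dist k w (proj d th0 x) w' (proj d th0 y) <= Rsup S).
    { apply Hlub. exists th0; auto. }
    assert (0 <= INR k ^ 2 * sqrt (INR d)).
    { apply Rmult_le_pos. apply pow_le; apply pos_INR. apply sqrt_pos. }
    eapply Rle_trans; [exact Hc|]. apply Rmult_le_compat_l; auto.
Qed.
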